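(* Let $\lambda$ be a partition, $R:=R_\lambda$, and let $\gamma$ be a gapless $R$-tuple. Then the $\lambda$-row end max tableau $M:=M_\lambda(\gamma)$ is a $\lambda$-key. Moreover, for each $h\in[r]$, setting $j:=\lambda_{q_{h+1}}$ (so that column $j+1$ has length $q_h$ and column $j$ has length $q_{h+1}$, column $0$ being the latent column when $j=0$), one has $M_{j+1}(q_h)=\gamma_{q_h}$, and if $s\ge0$ denotes the number of elements of $B(M_j)\setminus B(M_{j+1})$ that are less than $\gamma_{q_h}$, then these $s$ elements are exactly the $s$ largest elements of $[\gamma_{q_h}]\setminus B(M_{j+1})$.
   Context: Fix $n\ge1$; $[m]=\{1,\dots,m\}$. For $R\subseteq[n-1]$ with elements $q_1<\dots<q_r$, set $q_0:=0$, $q_{r+1}:=n$, $p_h:=q_h-q_{h-1}$; the $h$-th carrel is $\{q_{h-1}+1,\dots,q_h\}$. An $R$-tuple is an $n$-tuple with entries in $[n]$; it is upper if $\nu_i\ge i$ for all $i$ and $R$-increasing if strictly increasing on each carrel. A gapless $R$-tuple is an upper $R$-increasing $R$-tuple $\gamma$ such that whenever $h\in[r]$ has $\gamma_{q_h}>\gamma_{q_h+1}$, setting $s:=\gamma_{q_h}-\gamma_{q_h+1}+1$ one has $s\le p_{h+1}$ and $\gamma_{q_h+t}=\gamma_{q_h}-s+t$ for all $t\in[s]$. A partition is $\lambda=(\lambda_1\ge\cdots\ge\lambda_n\ge0)\in\mathbb{Z}^n$; its shape has boxes $(j,i)$ (column $j$, row $i$) with $1\le j\le\lambda_1$, $1\le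 i\le\zeta_j$, where $\zeta_j:=\#\{i:\lambda_i\ge j\}$ is the length of column $j$. $R_\lambda:=\{\zeta_j:j\in[\lambda_1],\zeta_j<n\}$. A tableau of shape $\lambda$ is a filling of the boxes with values in $[n]$, strictly increasing down each column and weakly increasing left to right along rows; $\mathcal{T}_\lambda$ is the set of these, partially ordered entrywise. $T_j(i)$ is the entry in column $j$, row $i$, and $B(T_j)$ is the set of entries of column $j$. By convention every tableau has a latent column $0$ with $T_0(i)=i$ for $i\in[n]$. A $\lambda$-key is $Y\in\mathcal{T}_\lambda$ with $B(Y_l)\supseteq B(Y_j)$ whenever $1\le l\le j\le\lambda_1$. The $\lambda$-row end list of $T\in\mathcal{T}_\lambda$ is the $n$-tuple $\omega$ with $\omega_i:=T_{\lambda_i}(i)$ (using the latent column if $\lambda_i=0$). For an upper $R_\lambda$-increasing $R_\lambda$-tuple $\alpha$, the set of $T\in\mathcal{T}_\lambda$ with $\lambda$-row end list $\alpha$ is nonempty and closed under entrywise maximum; its maximum element is the $\lambda$-row end max tableau $M_\lambda(\alpha)$. *)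

(* Defs.v *)
(* All n-tuples / columns are 1-indexed functions nat -> nat;
   only the values at the relevant indices matter. *)
From mathcomp Require Import all_boot.
Set Implicit Arguments. Unset Strict Implicit. Unset Printing Implicit Defensive.

Definition qseq (n : nat) (R : pred nat) : seq nat := [seq q <- iota 1 n.-1 | R q].
Definition rr (n : nat) (R : pred nat) : nat := size (qseq n R).
(* q_0 = 0, q_h = h-th smallest element of R (1<=h<=r), q_{r+1} = n *)
Definition qq (n : nat) (R : pred nat) (h : nat) : nat :=
  if h == 0 then 0 else nth n (qseq n R) h.-1.
Definition pp (n : nat) (R : pred nat) (h : nat) : nat := qq n R h - qq n R h.-1.

Definition is_Rtuple (n : nat) (g : nat -> nat) : Prop :=
  forall i, 1 <= i <= n -> 1 <= g i <= n.
Definition upper (n : nat) (g : nat -> nat) : Prop :=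
  forall i, 1 <= i <= n -> i <= g i.
Definition R_increasing (n : nat) (R : pred nat) (g : nat -> nat) : Prop :=
  forall h, 1 <= h <= (rr n R).+1 ->
  forall i i', qq n R h.-1 < i -> i < i' -> i' <= qq n R h -> g i < g i'.

Definition gapless (n : nat) (R : pred nat) (g : nat -> nat) : Prop :=
  [/\ is_Rtuple n g, upper n g, R_increasing n R g &
   forall h, 1 <= h <= rr n R ->
     g (qq n R h).+1 < g (qq n R h) ->
     let s := g (qq n R h) - g (qq n R h).+1 + 1 in
     s <= pp n R h.+1 /\
     (forall t, 1 <= t <= s -> g (qq n R h + t) = g (qq n R h) + t - s)].

Definition is_partition (n : nat) (lam : nat -> nat) : Prop :=
  forall i, 1 <= i < n -> lam i.+1 <= lam i.

(* zeta_j = #{i in [n] : lambda_i >= j}, the length of column j (zeta_0 = n) *)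
Definition zeta (n : nat) (lam : nat -> nat) (j : nat) : nat :=
  count (fun i => j <= lam i) (iota 1 n).

Definition Rlam (n : nat) (lam : nat -> nat) : pred nat :=
  fun q => (q < n) && has (fun j => zeta n lam j == q) (iota 1 (lam 1)).

(* A filling T : column j -> row i -> entry.  Entry accessor including the
   latent column 0 with T_0(i) = i. *)
Definition ent (T : nat -> nat -> nat) (j i : nat) : nat :=
  if j == 0 then i else T j i.

Definition is_tableau (n : nat) (lam : nat -> nat) (T : nat -> nat -> nat) : Prop :=
  [/\ forall j i, 1 <= j <= lam 1 -> 1 <= i <= zeta n lam j -> 1 <= T j i <= n,
      forall j i, 1 <= j <= lam 1 -> 1 <= i -> i < zeta n lam j -> T j i < T j i.+1 &
      forall j i, 1 <= j -> j < lam 1 -> 1 <= i <= zeta n lam j.+1 -> T j i <= T j.+1 i].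

Definition tab_le (n : nat) (lam : nat -> nat) (T U : nat -> nat -> nat) : Prop :=
  forall j i, 1 <= j <= lam 1 -> 1 <= i <= zeta n lam j -> T j i <= U j i.

Definition colB (n : nat) (lam : nat -> nat) (T : nat -> nat -> nat) (j : nat) : seq nat :=
  [seq ent T j i | i <- iota 1 (zeta n lam j)].

Definition is_key (n : nat) (lam : nat -> nat) (Y : nat -> nat -> nat) : Prop :=
  is_tableau n lam Y /\
  forall l j, 1 <= l -> l <= j -> j <= lam 1 -> {subset colB n lam Y j <= colB n lam Y l}.

Definition rowend (lam : nat -> nat) (T : nat -> nat -> nat) (i : nat) : nat :=
  ent T (lam i) i.

Definition is_rowend_max (n : nat) (lam : nat -> nat) (alpha : nat -> nat)
  (M : nat -> nat -> nat) : Prop :=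
  [/\ is_tableau n lam M,
      (forall i, 1 <= i <= n -> rowend lam M i = alpha i) &
      forall T, is_tableau n lam T -> (forall i, 1 <= i <= n -> rowend lam T i = alpha i) ->
        tab_le n lam T M].

(* Main.v *)
Require Import Defs.
From mathcomp Require Import all_boot zify.

Lemma drop_up (P : pred nat) (X : seq nat) : sorted ltn X ->
  (forall x y, x \in X -> y \in X -> P x -> x < y -> P y) ->
  filter P X = drop (size X - count P X) X.
Proof.
elim: X => [|x X IH] //= Hs Hup.
have HX : sorted ltn X by exact: (path_sorted Hs).
have Hall : all (ltn x) X by exact: (order_path_min ltn_trans Hs).
case Px: (P x) => /=.
- have HaP : all P X.
    apply/allP => y Hy; apply: (Hup x y) => //; first by rewrite inE eqxx.
      by rewrite inE Hy orbT.
    by move/allP: Hall => /(_ y Hy).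
  move/all_filterP: (HaP) => ->. move: HaP; rewrite all_count => /eqP ->.
  by rewrite add1n subnn drop0.
- rewrite add0n.
  have -> : (size X).+1 - count P X = (size X - count P X).+1.
    by have := count_size P X; lia.
  rewrite /= IH //. move=> a b Ha Hb; apply: Hup; by rewrite inE ?Ha ?Hb orbT.
Qed.

Lemma sx (CV CA : seq nat) (m n : nat) : m <= n -> m \in CA ->
  (forall x, x \in CV -> 1 <= x) ->
  (forall x y, x \in CV -> x \notin CA -> x <= m -> y \notin CA -> x < y -> y <= m -> y \in CV) ->
  let S := [seq x <- iota 1 n | [&& x \in CV, x \notin CA & x < m]] in
  let X := [seq x <- iota 1 m | x \notin CA] in
  S = drop (size X - size S) X.
Proof.
move=> Hmn HmA HV1 Hup S X.
have ES : S = filter (mem CV) X.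
  apply: (irr_sorted_eq ltn_trans ltnn).
  - exact: sorted_filter ltn_trans _ _ (iota_ltn_sorted 1 n).
  - apply: sorted_filter ltn_trans _ _ _.
    exact: sorted_filter ltn_trans _ _ (iota_ltn_sorted 1 m).
  - move=> x; rewrite !mem_filter !mem_iota /=.
    case xV: (x \in CV) => //=.
    have := HV1 x xV.
    case xA: (x \in CA) => //=.
    move: xA; case: (eqVneq x m) => [->|xm]; first by rewrite HmA.
    move=> _ h; apply/idP/idP; move=> /andP[]; lia.
have -> : size S = count (mem CV) X by rewrite ES size_filter.
rewrite ES; apply: drop_up.
  apply: sorted_filter ltn_trans _ _ _; exact: iota_ltn_sorted.
move=> x y; rewrite !mem_filter !mem_iota => /andP[xA /andP[x1 xm]] /andP[yA /andP[y1 ym]] xV xy.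
apply: (Hup x) => //; lia.
Qed.

Fixpoint cmin (c : nat -> nat) (a l : nat) : nat :=
  match l with 0 => c a | l'.+1 => minn (c a) (cmin c a.+1 l') end.

Lemma cmin_le c a l k : a <= k <= a + l -> cmin c a l <= c k.
Proof.
elim: l a => [|l IH] a /=.
  by rewrite addn0 => /andP[h1 h2]; have -> : k = a by lia.
move=> /andP[h1 h2]. case: (eqVneq k a) => [->|ka]; first by rewrite geq_minl.
have := IH a.+1 ltac:(lia). lia.
Qed.

Lemma cmin_ex c a l : exists k, a <= k <= a + l /\ cmin c a l = c k.
Proof.
elim: l a => [|l IH] a /=.
  by exists a; rewrite addn0 leqnn.
have [k [hk ek]] := IH a.+1.
case: (leqP (c a) (cmin c a.+1 l)) => h.
  exists a; split; [lia|lia].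
exists k; split; [lia|lia].
Qed.

Section Core.
Variables (g V A : nat -> nat) (a b d : nat).
Hypotheses (Hab : 1 <= a < b)
  (Hmono : forall i i', 1 <= i <= i' -> i' <= a -> A i + i' <= A i' + i)
  (HAa : A a = g a)
  (HVA : forall i, 1 <= i <= a -> V i = minn (A i) (i + d))
  (Hd : g a.+1 = a + d + 1)
  (HVg : forall i, a < i <= b -> V i = g i)
  (Hinc : forall i k, a < i <= k -> k <= b -> g i + (k - i) <= g k)
  (Hgap : g a.+1 <= g a -> a + (g a - g a.+1 + 1) <= b /\
     forall t, 1 <= t <= g a - g a.+1 + 1 -> g (a + t) = g a + t - (g a - g a.+1 + 1)).

Let CA := map A (iota 1 a).
Let CV := map V (iota 1 b).

Lemma cover i y : 1 <= i <= a -> i + d < A i -> i + d < y -> y <= g a -> y \in CV.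
Proof.
move=> Hi HA Hy1 Hy2.
case: (leqP (g a.+1) y) => Hy3.
  have [Hs Ht] := Hgap ltac:(lia).
  set t := y - g a.+1 + 1.
  have Ht1 : 1 <= t <= g a - g a.+1 + 1 by rewrite /t; lia.
  have := Ht t Ht1 => Et.
  have -> : y = V (a + t) by rewrite HVg; [rewrite Et /t; lia | rewrite /t; lia].
  apply: map_f; rewrite mem_iota; rewrite /t; lia.
have Hm := Hmono i (y - d) ltac:(lia) ltac:(lia).
have -> : y = V (y - d) by rewrite HVA; lia.
apply: map_f; rewrite mem_iota; lia.
Qed.

Lemma core_sub : {subset CA <= CV}.
Proof.
move=> x /mapP[i]; rewrite mem_iota => Hi ->.
have Hm := Hmono i a ltac:(lia) (leqnn a).
case: (leqP (A i) (i + d)) => h.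
  have -> : A i = V i by rewrite HVA; lia.
  apply: map_f; rewrite mem_iota; lia.
apply: (cover i) => //; lia.
Qed.

Lemma core_up x y : x \in CV -> x \notin CA -> x <= g a -> y \notin CA -> x < y -> y <= g a -> y \in CV.
Proof.
move=> /mapP[i]; rewrite mem_iota => Hi -> HnA Hx _ Hxy Hy.
case: (leqP i a) => Hia.
  have EV := HVA i ltac:(lia).
  case: (leqP (A i) (i + d)) => h.
    have EA : V i = A i by rewrite EV; lia.
    by move: HnA; rewrite EA map_f // mem_iota; lia.
  apply: (cover i) => //; lia.
have E1 := HVg i ltac:(lia).
have E2 := Hinc a.+1 i ltac:(lia) ltac:(lia).
apply: (cover a) => //; lia.
Qed.

End Core.

Lemma down_closed (P : pred nat) N :
  (forall k, 1 <= k < N -> P k.+1 -> P k) ->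
  forall m k, 1 <= k <= m -> m <= N -> P m -> P k.
Proof.
move=> HP; elim=> [|m IH] k Hk HmN Pm; first lia.
case: (eqVneq k m.+1) => [->//|km].
apply: IH; [lia|lia|]. apply: HP => //; lia.
Qed.

Lemma prefix_count (P : pred nat) n :
  (forall k, 1 <= k < n -> P k.+1 -> P k) ->
  forall k, 1 <= k <= n -> P k = (k <= count P (iota 1 n)).
Proof.
elim: n => [|n IH] HP k Hk; first lia.
have IH' := IH (fun k h => HP k ltac:(lia)).
have Hc := count_size P (iota 1 n); rewrite size_iota in Hc.
have -> : iota 1 n.+1 = iota 1 n ++ [:: n.+1] by rewrite -[in LHS](addn1 n) iotaD add1n.
rewrite count_cat /=.
case Pn: (P n.+1) => /=.
- have Hall : forall k, 1 <= k <= n.+1 -> P k.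
    move=> k' hk'; have := @down_closed P n.+1 HP n.+1 k' hk' (leqnn _) Pn; exact.
  have -> : count P (iota 1 n) = n.
    rewrite (eq_in_count (a2:=predT)); first by rewrite count_predT size_iota.
    move=> x; rewrite mem_iota => hx; apply: Hall; lia.
  rewrite Hall //; lia.
- rewrite addn0. case: (eqVneq k n.+1) => [->|kn]; first by rewrite Pn; lia.
  rewrite addn0; apply: IH'; lia.
Qed.

Section Part.
Variables (n : nat) (lam : nat -> nat).
Hypotheses (Hn : 1 <= n) (Hp : is_partition n lam).

Lemma lam_mono x y : 1 <= x <= y -> y <= n -> lam y <= lam x.
Proof.
move=> Hx; elim: y Hx => [|y IH] Hx Hy; first lia.
case: (eqVneq x y.+1) => [->//|xy].
have := Hp y ltac:(lia). have := IH ltac:(lia) ltac:(lia). lia.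
Qed.

Lemma zeta_spec j k : 1 <= k <= n -> (j <= lam k) = (k <= zeta n lam j).
Proof.
move=> Hk; rewrite /zeta; apply: (@prefix_count (fun i => j <= lam i)) => //.
move=> k' hk' /= h; have := Hp k' hk'; lia.
Qed.

Lemma zeta_le j : zeta n lam j <= n.
Proof. by have := count_size (fun i => j <= lam i) (iota 1 n); rewrite size_iota. Qed.

Lemma zeta0 : zeta n lam 0 = n.
Proof. by rewrite /zeta (eq_count (a2:=predT)) ?count_predT ?size_iota. Qed.

Lemma zeta_S j : zeta n lam j.+1 <= zeta n lam j.
Proof.
set z := zeta n lam j.+1.
case: (posnP z) => [->//|hz].
have hzn : z <= n by exact: zeta_le.
have := zeta_spec j.+1 z ltac:(lia); rewrite leqnn => h.
rewrite -zeta_spec; [lia|lia].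
Qed.

Lemma Rchar i : 1 <= i < n -> Rlam n lam i = (lam i.+1 < lam i).
Proof.
move=> Hi; rewrite /Rlam; have -> : i < n by lia. rewrite /=.
apply/hasP/idP.
- move=> [j]; rewrite mem_iota => hj /eqP hz.
  have h1 := zeta_spec j i ltac:(lia).
  have h2 := zeta_spec j i.+1 ltac:(lia).
  rewrite hz leqnn in h1. rewrite hz ltnn in h2.
  move: h1 h2; lia.
- move=> h; exists (lam i).
    rewrite mem_iota; have := lam_mono 1 i ltac:(lia) ltac:(lia); lia.
  have h1 := zeta_spec (lam i) i ltac:(lia).
  have h2 := zeta_spec (lam i) i.+1 ltac:(lia).
  rewrite leqnn in h1. apply/eqP. move: h1 h2; lia.
Qed.

Lemma notR_lam i k z : 1 <= i -> i <= z < k -> k <= n -> lam k = lam i -> ~~ Rlam n lam z.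
Proof.
move=> hi hz hk e; rewrite Rchar; last lia.
have := lam_mono i z ltac:(lia) ltac:(lia).
have := lam_mono z.+1 k ltac:(lia) ltac:(lia).
lia.
Qed.

Lemma lam_const x y : 1 <= x <= y -> y <= n -> (forall z, x <= z < y -> ~~ Rlam n lam z) -> lam y = lam x.
Proof.
move=> hx; elim: y hx => [|y IH] hx hy hz; first lia.
case: (eqVneq x y.+1) => [->//|xy].
have e := IH ltac:(lia) ltac:(lia) (fun z h => hz z ltac:(lia)).
have := hz y ltac:(lia). rewrite Rchar; last lia.
have := Hp y ltac:(lia). lia.
Qed.

End Part.

Section Q.
Variables (n : nat) (R : pred nat).

Lemma qsplit i : i <= n.-1 ->
  qseq n R = filter R (iota 1 i) ++ filter R (iota i.+1 (n.-1 - i)).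
Proof.
move=> hi; rewrite /qseq -filter_cat -[i.+1]add1n -iotaD; congr (filter _ (iota _ _)); lia.
Qed.

Lemma mem_q x : (x \in qseq n R) = [&& 1 <= x, x < n & R x].
Proof. rewrite /qseq mem_filter mem_iota; case: (R x); rewrite ?andbF ?andbT //=; lia. Qed.

Lemma q_sorted : sorted ltn (qseq n R).
Proof. exact: sorted_filter ltn_trans _ _ (iota_ltn_sorted _ _). Qed.

Lemma incr_notR (g : nat -> nat) i : 1 <= i < n -> ~~ R i -> R_increasing n R g -> g i < g i.+1.
Proof.
move=> hi hR Hinc.
have E := qsplit i ltac:(lia).
set s1 := filter R (iota 1 i) in E. set s2 := filter R (iota i.+1 (n.-1 - i)) in E.
have hs1 : forall y, y \in s1 -> R y /\ 1 <= y < 1 + i.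
  by move=> y; rewrite mem_filter mem_iota => /andP[-> ->].
have hs2 : forall y, y \in s2 -> i.+1 <= y.
  by move=> y; rewrite mem_filter mem_iota => /andP[_ /andP[-> _]].
clearbody s1 s2.
have hr : size s1 <= rr n R by rewrite /rr E size_cat; lia.
apply: (Hinc (size s1).+1); [lia| |lia|].
- rewrite /qq /=. case: (eqVneq (size s1) 0) => [e|hc] /=; first lia.
  rewrite E nth_cat; have -> : (size s1).-1 < size s1 by lia.
  have [Hr Hm] := hs1 _ (mem_nth n (ltac:(lia) : (size s1).-1 < size s1)).
  case: (eqVneq (nth n s1 (size s1).-1) i) => [e|ne]; first by rewrite -e Hr in hR.
  move: Hm ne; set x := nth _ _ _; move=> Hm /eqP ne; lia.
- rewrite /qq /= E nth_cat ltnn subnn /=.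
  case: (ltnP 0 (size s2)) => h2; last by rewrite nth_default //; lia.
  have := hs2 _ (mem_nth n h2); set x := nth _ _ _; lia.
Qed.

Lemma qq_S h : qq n R h.+1 = nth n (qseq n R) h.
Proof. by []. Qed.

Lemma qq_ltn i j : i < j -> j < size (qseq n R) -> nth n (qseq n R) i < nth n (qseq n R) j.
Proof.
move=> hij hj. apply: (sorted_ltn_nth ltn_trans n q_sorted); rewrite ?inE //; lia.
Qed.

Lemma qstruct h : 1 <= h <= rr n R ->
  [/\ 1 <= qq n R h, qq n R h < n, R (qq n R h), qq n R h < qq n R h.+1 &
      qq n R h.+1 <= n] /\ ((qq n R h.+1 < n -> R (qq n R h.+1)) /\
      forall x, qq n R h < x < qq n R h.+1 -> ~~ R x).
Proof.
rewrite /rr => Hh.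
case: h Hh => [|h] Hh; first lia.
rewrite !qq_S.
have qlt := qq_ltn. have mq := mem_q.
move: qlt mq Hh. move Es: (qseq n R) => s qlt mq Hh.
have ha : nth n s h \in s by apply: mem_nth; case/andP: Hh.
move: (ha); rewrite mq => /and3P[a1 an aR].
have Hb : (h.+1 < size s /\ nth n s h.+1 \in s) \/ nth n s h.+1 = n.
  case: (ltnP h.+1 (size s)) => hh; first by left; split => //; apply: mem_nth.
  by right; rewrite nth_default.
have Hab : nth n s h < nth n s h.+1.
  case: Hb => [[hh _]|->]; [exact: qlt | lia].
have Hbn : nth n s h.+1 <= n.
  case: Hb => [[_ hb]|->//]; move: hb; rewrite mq; set y := nth _ _ _; lia.
split => //; split.
- move=> hb; case: Hb => [[_ hb']|e]; last lia.
  by move: hb'; rewrite mq => /and3P[].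
- move=> x hx; apply/negP => xR.
  have xs : x \in s by rewrite mq xR andbT; lia.
  have hk := nth_index n xs. have kl : index x s < size s by rewrite index_mem.
  move: hk; set k := index x s => hk.
  case: (ltngtP k h) => hkh.
  + have := qlt _ _ hkh ltac:(lia); rewrite hk; lia.
  + case: (ltngtP k h.+1) => hkh2.
    * lia.
    * have := qlt _ _ hkh2 kl; rewrite hk; lia.
    * by move: hx; rewrite -hkh2 hk; lia.
  + by move: hx; rewrite -hkh hk; lia.
Qed.

Lemma qidx x : 1 <= x < n -> R x -> exists h, 1 <= h <= rr n R /\ qq n R h = x.
Proof.
move=> hx xR.
have xs : x \in qseq n R by rewrite mem_q xR andbT.
exists (index x (qseq n R)).+1; split.
  by rewrite /rr /= index_mem.
by rewrite qq_S nth_index.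
Qed.

End Q.

Section Main.
Variables (n : nat) (lam g : nat -> nat) (M : nat -> nat -> nat).
Hypotheses (Hn : 1 <= n) (Hp : is_partition n lam)
  (Hg : gapless n (Rlam n lam) g) (HM : is_rowend_max n lam g M).

Local Notation R := (Rlam n lam).
Let mono := lam_mono n lam Hn Hp.
Let zspec := zeta_spec n lam Hn Hp.
Let zS := zeta_S n lam Hn Hp.
Let Rch := Rchar n lam Hn Hp.
Let nRl := notR_lam n lam Hn Hp.
Let lconst := lam_const n lam Hn Hp.
Local Notation z := (zeta n lam).
Definition cc k := g k - k.
Definition Yf j i := i + cmin cc i (z j - i).

Lemma Rt : is_Rtuple n g. Proof. by case: Hg. Qed.
Lemma Up : upper n g. Proof. by case: Hg. Qed.
Lemma Ri : R_increasing n R g. Proof. by case: Hg. Qed.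

Lemma gn : g n = n.
Proof. have := Rt n ltac:(lia); have := Up n ltac:(lia); lia. Qed.

Lemma g_inc i k : 1 <= i <= k -> k <= n -> (forall y, i <= y < k -> ~~ R y) -> g i + (k - i) <= g k.
Proof.
move=> hi; elim: k hi => [|k IH] hi hk hR; first lia.
case: (eqVneq i k.+1) => [->|/eqP ik]; first lia.
have := IH ltac:(lia) ltac:(lia) (fun y h => hR y ltac:(lia)).
have := incr_notR n R g k ltac:(lia) (hR k ltac:(lia)) Ri.
lia.
Qed.

Lemma rowM0 k : 1 <= k <= n -> lam k = 0 -> g k = k.
Proof. case: HM => _ H _ hk e; by have := H k hk; rewrite /rowend e /ent /=. Qed.

Lemma rowM k : 1 <= k <= n -> 1 <= lam k -> M (lam k) k = g k.
Proof.
case: HM => _ H _ hk e; have := H k hk; rewrite /rowend /ent.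
by have -> : (lam k == 0) = false by apply/eqP; lia.
Qed.

Lemma Mtab : is_tableau n lam M. Proof. by case: HM. Qed.

Lemma colM j i k : 1 <= j <= lam 1 -> 1 <= i <= k -> k <= z j -> M j i + (k - i) <= M j k.
Proof.
move=> hj hi; elim: k hi => [|k IH] hi hk; first lia.
case: (eqVneq i k.+1) => [->|/eqP ik]; first lia.
have := IH ltac:(lia) ltac:(lia).
case: Mtab => _ H _; have := H j k hj ltac:(lia) ltac:(lia). lia.
Qed.

Lemma rowMc j j' k : 1 <= j <= j' -> j' <= lam 1 -> 1 <= k <= z j' -> M j k <= M j' k.
Proof.
move=> hj; elim: j' hj => [|j' IH] hj hj' hk; first lia.
case: (eqVneq j j'.+1) => [->|/eqP jj]; first lia.
have := zS j'.
have := IH ltac:(lia) ltac:(lia) ltac:(have := zS j'; lia).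
case: Mtab => _ _ H; have := H j' k ltac:(lia) ltac:(lia) ltac:(lia). lia.
Qed.

Lemma M_le j i : 1 <= j <= lam 1 -> 1 <= i <= z j -> M j i <= Yf j i.
Proof.
move=> hj hi.
have [k [hk ek]] := cmin_ex cc i (z j - i).
have hzn := zeta_le n lam j.
rewrite /Yf ek /cc.
have h1 := colM j i k hj ltac:(lia) ltac:(lia).
have hjk : j <= lam k by rewrite zspec //; lia.
have hl := mono 1 k ltac:(lia) ltac:(lia).
have hkz : k <= z (lam k) by rewrite -zspec //; lia.
have h2 := rowMc j (lam k) k ltac:(lia) ltac:(lia) ltac:(lia).
have h3 := rowM k ltac:(lia) ltac:(lia).
have h4 := Up k ltac:(lia).
lia.
Qed.
Lemma Yf_ge j i : i <= Yf j i.
Proof. rewrite /Yf; lia. Qed.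

Lemma Yf_le j i k : i <= k <= z j -> Yf j i <= i + cc k.
Proof. move=> h; rewrite /Yf; have := cmin_le cc i (z j - i) k ltac:(lia); lia. Qed.

Lemma Yf_ex j i : i <= z j -> exists k, i <= k <= z j /\ Yf j i = i + cc k.
Proof. move=> h; have [k [hk ek]] := cmin_ex cc i (z j - i). exists k; split; [lia| by rewrite /Yf ek]. Qed.

Lemma Ytab : is_tableau n lam Yf.
Proof.
split.
- move=> j i hj hi. have := Yf_le j i i ltac:(lia). have := Rt i ltac:(have := zeta_le n lam j; lia).
  have := Up i ltac:(have := zeta_le n lam j; lia). have := Yf_ge j i. rewrite /cc; lia.
- move=> j i hj hi1 hi2.
  have [k [hk ->]] := Yf_ex j i.+1 ltac:(lia).
  have := Yf_le j i k ltac:(lia). lia.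
- move=> j i hj1 hj2 hi.
  have [k [hk ->]] := Yf_ex j.+1 i ltac:(lia).
  have := Yf_le j i k ltac:(have := zS j; lia). lia.
Qed.

Lemma Yrow i : 1 <= i <= n -> rowend lam Yf i = g i.
Proof.
move=> hi; rewrite /rowend /ent.
case: (eqVneq (lam i) 0) => [e|/eqP ne]; first exact/esym/rowM0.
have hiz : i <= z (lam i) by rewrite -zspec.
have [k [hk ek]] := Yf_ex (lam i) i hiz. rewrite ek.
have := Yf_le (lam i) i i ltac:(lia). rewrite ek.
have hkn : k <= n by have := zeta_le n lam (lam i); lia.
have hlk : lam i <= lam k by rewrite zspec //; lia.
have := mono i k ltac:(lia) hkn.
move=> hlk2.
have := g_inc i k ltac:(lia) hkn (fun y hy => nRl i k y ltac:(lia) hy hkn ltac:(lia)).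
have := Up i hi. have := Up k ltac:(lia). rewrite /cc. lia.
Qed.

Lemma Y_le j i : 1 <= j <= lam 1 -> 1 <= i <= z j -> Yf j i <= M j i.
Proof.
case: HM => _ _ H hj hi. exact: (H Yf Ytab Yrow j i hj hi).
Qed.

Lemma M_eq j i : j <= lam 1 -> 1 <= i <= z j -> ent M j i = Yf j i.
Proof.
move=> hj hi; rewrite /ent.
case: (eqVneq j 0) => [e|/eqP ne].
  rewrite e in hi *. have := Yf_le 0 i n. rewrite zeta0 // /cc gn.
  have := Yf_ge 0 i. have := zeta_le n lam 0. lia.
have := M_le j i ltac:(lia) hi. have := Y_le j i ltac:(lia) hi. lia.
Qed.

Lemma colB_eq j : j <= lam 1 -> colB n lam M j = map (Yf j) (iota 1 (z j)).
Proof.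
move=> hj; rewrite /colB; apply/eq_in_map => i; rewrite mem_iota => hi.
apply: M_eq => //; lia.
Qed.

Lemma hdata h a b j : 1 <= h <= rr n R -> a = qq n R h -> b = qq n R h.+1 -> j = lam b ->
  [/\ z j = b, z j.+1 = a, j.+1 <= lam 1, (forall x, a < x <= b -> lam x = j) &
     (1 <= a < b /\ b <= n)].
Proof.
move=> hh ea eb ej.
have [[a1 an aR ab bn] [bR betw]] := qstruct n R h hh.
rewrite -ea -eb in a1 an aR ab bn bR betw.
have Hl : forall x, a < x <= b -> lam x = j.
  move=> x hx; rewrite ej; apply/esym; apply: lconst; [lia|lia|].
  move=> y hy; apply: betw; lia.
have la1 := Hl a.+1 ltac:(lia).
have := Rch a ltac:(lia); rewrite aR => /esym ha.
have hjb : j <= lam b by rewrite ej.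
have ml := mono 1 a ltac:(lia) ltac:(lia).
split => //.
- have h1 : b <= z j by rewrite -zspec //; lia.
  have := zeta_le n lam j.
  case: (ltnP b n) => hbn; last lia.
  have := Rch b ltac:(lia); rewrite (bR hbn) => /esym hb.
  have h2 : (b.+1 <= z j) = false by rewrite -zspec //; apply/negbTE; rewrite -ltnNge ej; lia.
  move: h2 => /negbT; rewrite -ltnNge; lia.
- have h1 : a <= z j.+1 by rewrite -zspec //; lia.
  have h2 : (a.+1 <= z j.+1) = false by rewrite -zspec; try lia; apply/negbTE; rewrite -ltnNge; lia.
  move: h2 => /negbT; rewrite -ltnNge; lia.
- lia.
all: try (split; lia).
Qed.

Lemma hcore h a b j : 1 <= h <= rr n R -> a = qq n R h -> b = qq n R h.+1 -> j = lam b ->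
  [/\ Yf j.+1 a = g a, {subset colB n lam M j.+1 <= colB n lam M j} &
   forall x y, x \in colB n lam M j -> x \notin colB n lam M j.+1 -> x <= g a ->
     y \notin colB n lam M j.+1 -> x < y -> y <= g a -> y \in colB n lam M j].
Proof.
move=> hh ea eb ej.
have [zj zj1 jl Hl [hab hbn]] := hdata h a b j hh ea eb ej.
have Hnr : forall i k y, a < i <= k -> k <= b -> i <= y < k -> ~~ R y.
  move=> i k y hi hk hy; apply: (nRl i k y); try lia.
  by rewrite (Hl i) ?(Hl k); lia.
have Hinc : forall i k, a < i <= k -> k <= b -> g i + (k - i) <= g k.
  move=> i k hi hk; apply: g_inc; try lia. move=> y hy; exact: (Hnr i k y).
have [d Ed] : exists d, d = g a.+1 - a.+1 by eexists.
have Upa := Up a.+1 ltac:(lia).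
have HAa : Yf j.+1 a = g a.
  have [k [hk ->]] := Yf_ex j.+1 a ltac:(lia).
  have -> : k = a by lia.
  have := Up a ltac:(lia); rewrite /cc; lia.
have Hmono : forall i i', 1 <= i <= i' -> i' <= a -> Yf j.+1 i + i' <= Yf j.+1 i' + i.
  move=> i i' hi hi'.
  have [k [hk ->]] := Yf_ex j.+1 i' ltac:(lia).
  have := Yf_le j.+1 i k ltac:(lia). lia.
have HVA : forall i, 1 <= i <= a -> Yf j i = minn (Yf j.+1 i) (i + d).
  move=> i hi.
  have [k [hk eA]] := Yf_ex j.+1 i ltac:(lia).
  have h1 := Yf_le j i k ltac:(lia).
  have h2 := Yf_le j i a.+1 ltac:(lia).
  have [k' [hk' eV]] := Yf_ex j i ltac:(lia).
  have h3 := Yf_le j.+1 i k' .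
  case: (leqP k' a) => hka.
    have := h3 ltac:(lia). rewrite /cc in h2 *. lia.
  have := Hinc a.+1 k' ltac:(lia) ltac:(lia).
  have := Up k' ltac:(lia). rewrite /cc in h2 eV *. lia.
have Hd : g a.+1 = a + d + 1 by lia.
have HVg : forall i, a < i <= b -> Yf j i = g i.
  move=> i hi.
  have h1 := Yf_le j i i ltac:(lia).
  have [k [hk eV]] := Yf_ex j i ltac:(lia).
  have := Hinc i k ltac:(lia) ltac:(lia).
  have := Up i ltac:(lia). have := Up k ltac:(lia).
  rewrite /cc in h1 eV *. lia.
have Hgap : g a.+1 <= g a -> a + (g a - g a.+1 + 1) <= b /\
     forall t, 1 <= t <= g a - g a.+1 + 1 -> g (a + t) = g a + t - (g a - g a.+1 + 1).
  move=> hle. case: (ltnP (g a.+1) (g a)) => hlt; last first.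
    split; first lia. move=> t ht; have -> : t = 1 by lia. rewrite addn1; lia.
  have G4 := Hg; case: G4 => _ _ _ /(_ h hh).
  rewrite /pp /= -ea -eb => /(_ hlt) [hs ht].
  split; first lia.
  move=> t htt; exact: ht.
have Hab : 1 <= a < b by lia.
rewrite !colB_eq //; last lia.
rewrite zj zj1.
split => //.
- exact: (core_sub g (Yf j) (Yf j.+1) a b d Hab Hmono HAa HVA Hd HVg Hgap).
- exact: (core_up g (Yf j) (Yf j.+1) a b d Hab Hmono HAa HVA Hd HVg Hinc Hgap).
Qed.
Lemma colsub j : j.+1 <= lam 1 -> {subset colB n lam M j.+1 <= colB n lam M j}.
Proof.
move=> hj.
have hzS := zS j. have hzn := zeta_le n lam j.
case: (eqVneq (z j.+1) (z j)) => [e|/eqP ne].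
  have EY : Yf j.+1 =1 Yf j by move=> i; rewrite /Yf e.
  rewrite (colB_eq j.+1) // (colB_eq j); last lia.
  by rewrite e (eq_map EY).
have [a ea] : exists a, a = z j.+1 by eexists.
have a1 : 1 <= a by rewrite ea -zspec //; lia.
have an : a < n by lia.
have ja : j.+1 <= lam a by rewrite zspec ?ea; lia.
have ja1 : lam a.+1 < j.+1.
  have := zspec j.+1 a.+1 ltac:(lia). rewrite -ea ltnn => /negbT; rewrite -ltnNge //.
have ja2 : j <= lam a.+1 by rewrite zspec; lia.
have aR : R a by rewrite Rch; lia.
have [h [hh eh]] := qidx n R a ltac:(lia) aR.
have [_ _ _ Hl [hab _]] := hdata h a (qq n R h.+1) (lam (qq n R h.+1)) hh (esym eh) erefl erefl.
have Ej : lam (qq n R h.+1) = j by have := Hl a.+1 ltac:(lia); lia.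
have [_ Hs _] := hcore h a (qq n R h.+1) (lam (qq n R h.+1)) hh (esym eh) erefl erefl.
by rewrite Ej in Hs.
Qed.

Lemma key_sub l j : 1 <= l <= j -> j <= lam 1 -> {subset colB n lam M j <= colB n lam M l}.
Proof.
move=> hl; elim: j hl => [|j IH] hl hj; first lia.
case: (eqVneq l j.+1) => [->//|/eqP ne].
move=> x hx; apply: (IH ltac:(lia) ltac:(lia)); exact: (colsub j hj).
Qed.

End Main.

Theorem lemma5p1 (n : nat) (lam : nat -> nat) (g : nat -> nat) (M : nat -> nat -> nat) :
  1 <= n ->
  is_partition n lam ->
  gapless n (Rlam n lam) g ->
  is_rowend_max n lam g M ->
  is_key n lam M /\
  (forall h, 1 <= h <= rr n (Rlam n lam) ->
     let qh := qq n (Rlam n lam) h in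
     let j := lam (qq n (Rlam n lam) h.+1) in
     ent M j.+1 qh = g qh /\
     (let S := [seq x <- iota 1 n |
                  [&& x \in colB n lam M j, x \notin colB n lam M j.+1 & x < g qh]] in
      let X := [seq x <- iota 1 (g qh) | x \notin colB n lam M j.+1] in
      S = drop (size X - size S) X)).
Proof.
move=> Hn Hp Hg HM; split.
  split; first exact: (Mtab n lam g M HM).
  move=> l j hl hlj hj; apply: (key_sub n lam g M Hn Hp Hg HM); lia.
move=> h hh.
have [zj zj1 jl _ [hab hbn]] := hdata n lam Hn Hp h (qq n (Rlam n lam) h) (qq n (Rlam n lam) h.+1)
   (lam (qq n (Rlam n lam) h.+1)) hh erefl erefl erefl.
have [HY Hsub Hup] := hcore n lam g M Hn Hp Hg HM h (qq n (Rlam n lam) h) (qq n (Rlam n lam) h.+1)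
   (lam (qq n (Rlam n lam) h.+1)) hh erefl erefl erefl.
move: zj zj1 jl hab hbn HY Hsub Hup.
move: (qq n (Rlam n lam) h) (qq n (Rlam n lam) h.+1) => a b.
move: (lam b) => j zj zj1 jl hab hbn HY Hsub Hup /=.
have ea : ent M j.+1 a = g a by rewrite (M_eq n lam g M Hn Hp Hg HM) // zj1; lia.
split => //.
apply: sx.
- have := Rt n lam g Hg a ltac:(lia); lia.
- by rewrite -ea /colB zj1 map_f // mem_iota; lia.
- move=> x; rewrite (colB_eq n lam g M Hn Hp Hg HM) //; last lia.
  move=> /mapP[i]; rewrite mem_iota => hi ->. have := Yf_ge n lam g Hn j i; lia.
- exact: Hup.
Qed.
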